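(* Let $G$ be a graph and let $n\geq 2$. Then the set of distinct Laplacian eigenvalues of the blow-up $\uparrow^{n}G$ is $$\sigma\left(\uparrow^{n}G\right)=n\cdot\sigma(G)\cup \{n\, d_u:u\in V(G)\}.$$ Moreover, for any vertex $u$ of $G$ and any $j\in\mathbb{Z}_n$, $$\sigma_{(j,u)}\left(\uparrow^{n}G\right)=n\cdot\sigma_u(G)\cup\{n\, d_u\}.$$
   Context: All graphs are simple, undirected and unweighted. For a graph $G$ with vertex set $V$, $d_u$ is the degree of vertex $u$, and $L=D-A$ is its Laplacian matrix ($D$ the diagonal degree matrix, $A$ the adjacency matrix). $\sigma(G)$ denotes the set of distinct Laplacian eigenvalues of $G$. If $L=\sum_{\lambda\in\sigma(G)}\lambda E_\lambda$ is the spectral decomposition ($E_\lambda$ the orthogonal projection onto the $\lambda$-eigenspace), the eigenvalue support of a vertex $u$ is $\sigma_u(G)=\{\lambda\in\sigma(G): E_\lambda\mathbf{e}_u\neq \mathbf{0}\}$. For a set $S$ of numbers, $n\cdot S=\{ns:s\in S\}$. The blow-up $\uparrow^{n}G$ of $n$ copies of $G$ is the graph with vertex set $\mathbb{Z}_n\times V$, in which $(l,u)$ and $(m,v)$ are adjacent if and only if $u$ and $v$ are adjacent in $G$. *)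

(* Defs.v *)
From mathcomp Require Import all_boot all_order all_algebra.
From mathcomp Require Export reals.
Set Implicit Arguments. Unset Strict Implicit. Unset Printing Implicit Defensive.
Import Order.TTheory GRing.Theory Num.Theory.
Local Open Scope ring_scope.

(* A simple graph on a finite vertex type V is given by an adjacency
   relation adj : rel V, assumed symmetric and irreflexive (hypotheses of
   the theorem). *)

Section Graphs.
Variable R : realType.
Variable V : finType.
Variable adj : rel V.

Definition deg (u : V) : nat := #|[set v | adj u v]|.

Definition lap (u v : V) : R :=
  (if u == v then (deg u)%:R else 0) - (if adj u v then 1 else 0).

Definition lapv (x : V -> R) : V -> R := fun u => \sum_(v : V) lap u v * x v.

Definition in_eigenspace (lam : R) (x : V -> R) : Prop :=
  forall u, lapv x u = lam * x u.

Definition lap_eigenvalue (lam : R) : Prop :=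
  exists x : V -> R, (exists u, x u != 0) /\ in_eigenspace lam x.

Definition dotv (x y : V -> R) : R := \sum_(v : V) x v * y v.
Definition evec (u : V) : V -> R := fun v => if v == u then 1 else 0.

(* p = E_lambda y : the orthogonal projection of y onto the lambda-eigenspace,
   i.e. p is in the eigenspace and y - p is orthogonal to it. *)
Definition is_eproj (lam : R) (y p : V -> R) : Prop :=
  in_eigenspace lam p /\
  forall x, in_eigenspace lam x -> dotv (fun v => y v - p v) x = 0.

Definition eig_support (u : V) (lam : R) : Prop :=
  lap_eigenvalue lam /\
  exists p : V -> R, is_eproj lam (evec u) p /\ exists v, p v != 0.

End Graphs.

(* blow-up of n copies: vertex set Z_n x V (Z_n represented by 'I_n),
   (l,u) ~ (m,v) iff u ~ v in G *)
Definition blowup (n : nat) (V : finType) (adj : rel V) : rel ('I_n * V)%type :=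
  fun x y => adj x.2 y.2.
Arguments blowup n {V} adj.

(* Main.v *)
Require Import Defs.
From mathcomp Require Import all_boot all_order all_algebra.
From mathcomp Require Import reals.
Import Order.TTheory GRing.Theory Num.Theory.
Local Open Scope ring_scope.

Lemma proj_mx (R : realType) (N : nat) (A : 'M[R]_N) (sym : A^T = A) (y : 'rV[R]_N) :
  exists p z : 'rV[R]_N, p *m A = 0 /\ y = p + z *m A.
Proof.
set K := kermx A.
have cap0 : (K :&: A)%MS == 0.
  rewrite -submx0; apply/row_subP => i.
  set x := row i _.
  have : (x <= K :&: A)%MS by exact: row_sub.
  rewrite sub_capmx => /andP[/sub_kermxP xA /submxP[D xD]].
  have xx : x *m x^T = 0.
    by rewrite {1}xD -mulmxA -{1}sym -trmx_mul xA trmx0 mulmx0.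
  have -> : x = 0.
    apply/rowP => j; rewrite [RHS]mxE.
    have tE : forall k, x^T k 0 = x 0 k by move=> k; rewrite mxE.
    have := congr1 (fun M : 'M[R]_1 => M 0 0) xx; rewrite [LHS]mxE [RHS]mxE.
    under eq_bigr do rewrite tE -expr2.
    move/psumr_eq0P => H.
    have := H (fun k _ => sqr_ge0 _) j isT.
    by move=> /eqP; rewrite sqrf_eq0 => /eqP ->.
  by rewrite sub0mx.
have full : row_full (K + A)%MS.
  rewrite /row_full; apply/eqP.
  have := mxrank_sum_cap K A; move/eqP: cap0 => ->; rewrite mxrank0 addn0 => ->.
  by rewrite mxrank_ker subnK // rank_leq_row.
have /sub_addsmxP[u yu] : (y <= K + A)%MS by exact: submx_full.
exists (u.1 *m K), u.2; split; last by [].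
by rewrite -mulmxA mulmx_ker mulmx0.
Qed.


Lemma sum_enum (R : realType) (V : finType) (F : V -> R) :
  \sum_(v : V) F v = \sum_(i < #|V|) F (enum_val i).
Proof.
rewrite (reindex (@enum_val V predT)) //=.
by apply: onW_bij; exact: enum_val_bij.
Qed.

Lemma proj_exists (R : realType) (V : finType) (M : V -> V -> R)
  (symM : forall u v, M u v = M v u) (y : V -> R) :
  exists p : V -> R, (forall u, \sum_v M u v * p v = 0) /\
    (forall x, (forall u, \sum_v M u v * x v = 0) -> \sum_v (y v - p v) * x v = 0).
Proof.
pose N := #|V|.
pose ev : 'I_N -> V := fun i => enum_val i.
pose er : V -> 'I_N := fun v => enum_rank v.
have evK : cancel ev er by move=> i; exact: enum_valK.
have erK : cancel er ev by move=> i; exact: enum_rankK.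
have sE : forall F : V -> R, \sum_v F v = \sum_(i < N) F (ev i) by move=> F; exact: sum_enum.
pose A : 'M[R]_N := \matrix_(i, j) M (ev i) (ev j).
have AE : forall i j, A i j = M (ev i) (ev j) by move=> i j; rewrite mxE.
have symA : A^T = A by apply/matrixP => i j; rewrite !mxE symM.
have [p [z [pA yE]]] := @proj_mx R _ A symA (\row_i y (ev i)).
exists (fun u => p 0 (er u)); split.
  move=> u; have := congr1 (fun B : 'rV[R]_N => B 0 (er u)) pA.
  rewrite /= [RHS]mxE mxE => H; rewrite -[RHS]H sE.
  under eq_bigr do rewrite evK.
  by under [RHS]eq_bigr do rewrite AE erK symM mulrC.
move=> x Hx.
have yv : forall v, y v - p 0 (er v) = \sum_i z 0 i * M (ev i) v.
  move=> v; have := congr1 (fun B : 'rV[R]_N => B 0 (er v)) yE.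
  rewrite /= !mxE erK => ->; rewrite addrAC subrr add0r.
  by apply: eq_bigr; move=> i _; rewrite AE erK.
under eq_bigr do rewrite yv mulr_suml.
rewrite exchange_big /= big1 // => i _.
under eq_bigr do rewrite -mulrA.
by rewrite -mulr_sumr Hx mulr0.
Qed.


Section General.
Variable R : realType.
Variable V : finType.
Variable adj : rel V.
Hypothesis Hsym : symmetric adj.

Lemma lapvE (x : V -> R) u :
  lapv adj x u = (deg adj u)%:R * x u - \sum_v (if adj u v then x v else 0).
Proof.
rewrite /lapv; under eq_bigr do rewrite /lap mulrBl; rewrite sumrB; congr (_ - _).
  rewrite (bigD1 u) //= eqxx big1 ?addr0 // => v; rewrite eq_sym => /negbTE ->.
  by rewrite mul0r.
by apply: eq_bigr; move=> v _; case: ifP; rewrite ?mul1r ?mul0r.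
Qed.

Lemma lap_sym u v : lap R adj u v = lap R adj v u.
Proof. by rewrite /lap eq_sym Hsym; case: eqVneq => // ->. Qed.

Lemma proj_G (lam : R) (y : V -> R) : exists p, is_eproj adj lam y p.
Proof.
pose M u v := lap R adj u v - (if u == v then lam else 0).
have symM : forall u v, M u v = M v u by move=> u v; rewrite /M lap_sym eq_sym.
have ME : forall x u, \sum_v M u v * x v = lapv adj x u - lam * x u.
  move=> x u; rewrite /M; under eq_bigr do rewrite mulrBl; rewrite sumrB; congr (_ - _).
  rewrite (bigD1 u) //= eqxx big1 ?addr0 // => v; rewrite eq_sym => /negbTE ->.
  by rewrite mul0r.
have [p [pE pO]] := @proj_exists R V M symM y.
exists p; split.
  by move=> u; apply/eqP; rewrite -subr_eq0 -ME pE.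
move=> x Hx; apply: pO => u; by rewrite ME Hx subrr.
Qed.

Lemma eproj_nz (lam : R) y p : is_eproj adj lam y p ->
  ((exists v, p v != 0) <-> exists x, in_eigenspace adj lam x /\ dotv y x != 0).
Proof.
move=> [pE pO]; split.
  move=> [v pv]; exists p; split => //.
  have : dotv y p = dotv p p.
    by apply/eqP; rewrite -subr_eq0 -(pO p pE) /dotv -sumrB; apply/eqP/eq_bigr; move=> w _; rewrite mulrBl.
  move=> ->; apply/eqP => H.
  have := @psumr_eq0P R V predT (fun w => p w * p w) (fun w _ => ltac:(by rewrite /= -expr2 sqr_ge0)) H v isT.
  by move/eqP; rewrite -expr2 sqrf_eq0 (negbTE pv).
move=> [x [xE dx]].
case: (boolP [exists v, p v != 0]) => [/existsP // | /existsPn H].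
have p0 : forall v, p v = 0 by move=> v; apply/eqP; have := H v; rewrite negbK.
move: dx; have := pO x xE; rewrite /dotv.
under eq_bigr do rewrite p0 subr0.
by move=> ->; rewrite eqxx.
Qed.

Lemma eig_supportE u (lam : R) :
  eig_support adj u lam <-> exists x, in_eigenspace adj lam x /\ x u != 0.
Proof.
have dE : forall x : V -> R, dotv (evec R u) x = x u.
  move=> x; rewrite /dotv /evec (bigD1 u) //= eqxx mul1r big1 ?addr0 // => v /negbTE ->.
  by rewrite mul0r.
split.
  move=> [_ [p [pP pnz]]]; have [H _] := @eproj_nz lam _ _ pP.
  by have [x [xE]] := H pnz; rewrite dE => ?; exists x.
move=> [x [xE xu]]; split; first by exists x; split => //; exists u.
have [p pP] := proj_G lam (evec R u); exists p; split => //.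
by apply/(@eproj_nz lam _ _ pP); exists x; rewrite dE.
Qed.

End General.


Section Blow.
Variable R : realType.
Variable V : finType.
Variable adj : rel V.
Variable n : nat.
Local Notation B := (blowup n adj).
Local Notation W := ('I_n * V)%type.

Definition sX (X : W -> R) (v : V) : R := \sum_(m < n) X (m, v).
Definition TX (X : W -> R) (u : V) : R := \sum_v (if adj u v then sX X v else 0).

Lemma sumW (F : W -> R) : \sum_(y : W) F y = \sum_(m < n) \sum_(v : V) F (m, v).
Proof. by rewrite pair_bigA; apply: eq_bigr; move=> [m v]. Qed.

Lemma degB l u : deg B (l, u) = (n * deg adj u)%N.
Proof.
rewrite /deg -[n in (n * _)%N]card_ord -cardsT -cardsX.
by apply: eq_card => -[m v]; rewrite !inE.
Qed.

Lemma lapvB (X : W -> R) l u :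
  lapv B X (l, u) = (n * deg adj u)%:R * X (l, u) - TX X u.
Proof.
rewrite lapvE degB; congr (_ - _).
rewrite sumW.
rewrite exchange_big /TX; apply: eq_bigr; move=> v _ /=.
rewrite /blowup /=; case: ifP => // _; rewrite big1 //.
Qed.

Lemma lift_eig (lam : R) (x : V -> R) :
  in_eigenspace adj lam x -> in_eigenspace B (n%:R * lam) (fun y => x y.2).
Proof.
move=> xE [l u]; rewrite lapvB /=.
have sE : forall v, sX (fun y => x y.2) v = n%:R * x v.
  by move=> v; rewrite /sX /= sumr_const card_ord mulr_natl.
rewrite /TX; under eq_bigr do rewrite sE.
have -> : \sum_v (if adj u v then n%:R * x v else 0) = n%:R * \sum_v (if adj u v then x v else 0).
  by rewrite mulr_sumr; apply: eq_bigr; move=> v _; case: ifP; rewrite ?mulr0.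
rewrite -mulrA -(xE u) lapvE natrM -mulrA -mulrBr.
reflexivity.
Qed.

Lemma sum_eig (mu : R) (X : W -> R) :
  in_eigenspace B mu X -> forall u, n%:R * lapv adj (sX X) u = mu * sX X u.
Proof.
move=> XE u.
have : \sum_(l < n) lapv B X (l, u) = \sum_(l < n) mu * X (l, u).
  by apply: eq_bigr; move=> l _; rewrite XE.
rewrite -mulr_sumr -/(sX X u) => <-.
under eq_bigr do rewrite lapvB.
rewrite sumrB -mulr_sumr sumr_const card_ord -/(sX X u) lapvE.
rewrite mulrBr natrM -mulrA mulr_natl.
by rewrite -/(TX X u) -[TX X u *+ n]mulr_natl.

Qed.

Lemma loc_eig (mu : R) (X : W -> R) :
  in_eigenspace B mu X -> forall l u, ((n * deg adj u)%:R - mu) * X (l, u) = TX X u.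
Proof.
move=> XE l u; rewrite mulrBl -(XE (l, u)) lapvB.
by rewrite opprB addrC subrK.
Qed.

End Blow.

Arguments sX {R V n}. Arguments TX {R V} adj {n}. Arguments lapvB {R V adj n}.
Arguments lift_eig {R V adj n lam x}. Arguments sum_eig {R V adj n mu X}.
Arguments loc_eig {R V adj n mu X}. Arguments eig_supportE {R V adj}.
Arguments lapvE {R V adj}. Arguments degB {V adj n}.

Section Main.
Variable R : realType.
Variable V : finType.
Variable adj : rel V.
Variable n : nat.
Local Notation B := (blowup n adj).
Local Notation W := ('I_n * V)%type.

Definition Zv (j k : 'I_n) (u : V) (y : W) : R :=
  (if y == (j, u) then 1 else 0) - (if y == (k, u) then 1 else 0).

Lemma d1 (j : 'I_n) (u v : V) :
  \sum_(m < n) (if (m, v) == (j, u) then 1 else 0 : R) = if v == u then 1 else 0.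
Proof.
rewrite (bigD1 j) //= big1 => [|m /negbTE mj]; last by rewrite xpair_eqE mj.
by rewrite xpair_eqE eqxx /= addr0.
Qed.

Lemma delta_eig (j k : 'I_n) (u : V) :
  in_eigenspace B ((n * deg adj u)%:R) (Zv j k u).
Proof.
have s0 : forall v, sX (Zv j k u) v = 0.
  by move=> v; rewrite /sX /Zv sumrB !d1 subrr.
have T0 : forall w, TX adj (Zv j k u) w = 0.
  by move=> w; rewrite /TX big1 // => v _; rewrite s0; case: ifP.
move=> [l w]; rewrite lapvB T0 subr0.
case: (eqVneq w u) => [-> //| wu].
by rewrite /Zv !xpair_eqE (negbTE wu) !andbF subrr !mulr0.
Qed.

Lemma sX_eig (mu : R) (X : W -> R) : (n%:R != 0 :> R) ->
  in_eigenspace B mu X -> in_eigenspace adj (mu / n%:R) (sX X).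
Proof.
move=> nz XE w; apply: (mulfI nz); rewrite (sum_eig XE).
by rewrite mulrA [n%:R * _]mulrC divfK.
Qed.

End Main.
Arguments Zv {R V n}. Arguments delta_eig {R V adj n}. Arguments sX_eig {R V adj n mu X}.

Theorem proposition2 (R : realType) (V : finType) (adj : rel V)
    (Hsym : symmetric adj) (Hirr : irreflexive adj) (n : nat) (hn : (2 <= n)%N) :
  (forall mu : R,
     lap_eigenvalue (blowup n adj) mu <->
     ((exists2 lam : R, lap_eigenvalue adj lam & mu = n%:R * lam) \/
      (exists u : V, mu = (n * deg adj u)%:R)))
  /\
  (forall (u : V) (j : 'I_n) (mu : R),
     eig_support (blowup n adj) (j, u) mu <->
     ((exists2 lam : R, eig_support adj u lam & mu = n%:R * lam) \/
      mu = (n * deg adj u)%:R)).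
Proof.
pose i0 : 'I_n := Ordinal (ltnW hn).
pose i1 : 'I_n := Ordinal hn.
have i01 : i0 != i1 by [].
have nz : (n%:R != 0 :> R) by rewrite pnatr_eq0 -lt0n (ltnW hn).
have symB : symmetric (blowup n adj) by move=> x y; rewrite /blowup Hsym.
split.
- move=> mu; split.
  + move=> [X [[[l u] Xnz] XE]].
    case: (boolP [exists v, sX X v != 0]) => [/existsP [v sv] | /existsPn H].
    * left; exists (mu / n%:R); last by rewrite mulrC divfK.
      exists (sX X); split; first by exists v.
      exact: sX_eig.
    * right; exists u.
      have T0 : TX adj X u = 0.
        rewrite /TX big1 // => v _; have := H v; rewrite negbK => /eqP ->.
        by case: ifP.
      have := loc_eig XE l u; rewrite T0 => /eqP.
      by rewrite mulf_eq0 (negbTE Xnz) orbF subr_eq0 => /eqP ->.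
  + move=> [[lam [x [[v xv] xE]] ->] | [u ->]].
    * exists (fun y => x y.2); split; first by exists (i0, v).
      exact: lift_eig.
    * exists (Zv i0 i1 u); split; last exact: delta_eig.
      exists (i0, u); rewrite /Zv eqxx xpair_eqE (negbTE i01) /= subr0.
      exact: oner_neq0.
- move=> u j mu; rewrite eig_supportE //; split.
  + move=> [X [XE Xnz]].
    case: (eqVneq mu (n * deg adj u)%:R) => [-> | ne]; first by right.
    left.
    have c0 : (n * deg adj u)%:R - mu != 0 by rewrite subr_eq0 eq_sym.
    have Xl : forall l, X (l, u) = X (j, u).
      by move=> l; apply: (mulfI c0); rewrite !(loc_eig XE).
    have su : sX X u = n%:R * X (j, u).
      rewrite /sX; under eq_bigr do rewrite Xl.
      by rewrite sumr_const card_ord mulr_natl.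
    exists (mu / n%:R); last by rewrite mulrC divfK.
    apply/eig_supportE => //; exists (sX X); split; first exact: sX_eig.
    by rewrite su mulf_neq0.
  + move=> [[lam /(eig_supportE Hsym _ _) [x [xE xu]] ->] | ->].
    * exists (fun y => x y.2); split => //.
      exact: lift_eig.
    * pose k := if j == i0 then i1 else i0.
      have jk : (j, u) == (k, u) = false.
        rewrite xpair_eqE eqxx andbT /k; case: (eqVneq j i0) => [->|ne].
          exact: negbTE.
        exact: negbTE.
      exists (Zv j k u); split; first exact: delta_eig.
      by rewrite /Zv eqxx jk subr0 oner_neq0.
Qed.
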